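(* Let $T$ be a (not necessarily binary) planted tree over $L$, let $T'$ and $T''$ be binary trees that both resolve $T$, and let $\sigma$ be a fixed leaf ordering. Let $v$ be a vertex of $T$ with children $u_1,\dots,u_p$ ($p\ge2$), and for each $t$ let $s_t=\min\{\sigma(l): l\in L(T_{u_t})\}$. For a binary resolution $\tilde T\in\{T',T''\}$ let $V_I(B_{\tilde T})$ be the set of internal vertices $w$ of $\tilde T$ whose cluster $cl_{\tilde T}(w)$ is the union of the clusters $L(T_{u_t})$ over at least two children $u_t$ of $v$. Then $$\sigma(V_I(B_{T'}))=\sigma(V_I(B_{T''}))=\{-s_t : 1\le t\le p,\ s_t\ne\min\{s_1,\dots,s_p\}\},$$ where $\sigma(\cdot)$ denotes the OLA index of a vertex computed in $T'$, respectively $T''$.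
   Context: Trees. Fix a finite label set $L$ containing a distinguished label $\rho$, and let $n=|L\setminus\{\rho\}|$. A planted tree $T$ over $L$ is a rooted tree whose top vertex is labeled $\rho$ and has exactly one child $r(T)$ (the root), in which every other non-leaf vertex has at least two children, and whose leaves are bijectively labeled by $L\setminus\{\rho\}$; it is binary if every non-leaf vertex other than $\rho$ has exactly two children. For a vertex $v$, $T_v$ is the subtree rooted at $v$ and $cl(v)=L(T_v)$ is its cluster. A binary tree $T'$ resolves $T$ if $L(T')=L(T)$ and there is a set of edges of $T'$ whose contraction yields $T$. OLA indexing. A leaf ordering is a bijection $\sigma:L\setminus\{\rho\}\to\{0,\dots,n-1\}$. For a binary tree $T'$ over $L$ and a vertex $v\ne\rho$, let $\mu(v)=\min\{\sigma(l): l\in L(T'_v)\setminus\{\rho\}\}$; each leaf $l$ gets index $\sigma(l)$, and each internal vertex $v$ (not a leaf, not $\rho$) with children $v_1,v_2$ gets index $\sigma(v):=-\max\{\mu(v_1),\mu(v_2)\}$. *)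

(* Defs.v *)
From mathcomp Require Import all_boot all_order all_algebra.
From Stdlib Require Import Permutation.
Set Implicit Arguments. Unset Strict Implicit. Unset Printing Implicit Defensive.

(* Unordered rooted trees with leaves labelled by X (= L \ {rho}).
   A term [t : tree X] represents the subtree T_{r(T)} hanging below the
   planting vertex rho; the children list of a node is considered up to
   permutation (see [contr]). *)
Inductive tree (X : Type) : Type :=
| Lf of X
| Nd of seq (tree X).
Arguments Lf {X}.
Arguments Nd {X}.

Section Trees.
Variable X : finType.

Fixpoint leaves (t : tree X) : seq X :=
  match t with Lf x => [:: x] | Nd cs => flatten (map leaves cs) end.

Fixpoint all_nodes (P : nat -> bool) (t : tree X) : bool :=
  match t with Lf _ => true | Nd cs => P (size cs) && all (all_nodes P) cs end.

Definition leaf_bij (t : tree X) : Prop :=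
  uniq (leaves t) /\ forall x : X, x \in leaves t.

Definition planted_tree (t : tree X) : Prop :=
  all_nodes (fun k => 1 < k) t /\ leaf_bij t.

Definition binary_tree (t : tree X) : Prop :=
  all_nodes (fun k => k == 2) t /\ leaf_bij t.

(* [subtree s t]: s is T_w for some vertex w of t *)
Inductive subtree : tree X -> tree X -> Prop :=
| sub_refl t : subtree t t
| sub_child s c cs : List.In c cs -> subtree s c -> subtree s (Nd cs).

(* [contr t1 t2]: contracting some set of (inner) edges of t1 yields a tree
   isomorphic to t2.  [fcontr cs ds]: the forest cs of children becomes the
   forest ds (up to reordering). *)
Inductive contr : tree X -> tree X -> Prop :=
| cLf x : contr (Lf x) (Lf x)
| cNd cs ds : fcontr cs ds -> contr (Nd cs) (Nd ds)
with fcontr : seq (tree X) -> seq (tree X) -> Prop :=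
| fnil : fcontr [::] [::]
| fkeep c d cs ds : contr c d -> fcontr cs ds -> fcontr (c :: cs) (d :: ds)
| fcollapse cs' cs ds1 ds2 :
    fcontr cs' ds1 -> fcontr cs ds2 -> fcontr (Nd cs' :: cs) (ds1 ++ ds2)
| fperm cs ds ds' : fcontr cs ds -> Permutation ds ds' -> fcontr cs ds'.

Definition resolves (t' t : tree X) : Prop :=
  binary_tree t' /\ contr t' t.

Definition leaf_ordering (sigma : X -> 'I_#|X|) : Prop := bijective sigma.

(* mu(v) = min sigma over leaves of T_v (the bound #|X| is never attained
   for a nonempty leaf set) *)
Definition mu (sigma : X -> 'I_#|X|) (t : tree X) : nat :=
  \big[minn/#|X|]_(l <- leaves t) (sigma l : nat).

Definition ola (sigma : X -> 'I_#|X|) (t : tree X) : int :=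
  match t with
  | Lf x => Posz (sigma x)
  | Nd [:: a; b] => (- Posz (maxn (mu sigma a) (mu sigma b)))%R
  | Nd _ => 0%R
  end.

Definition is_internal (t : tree X) : bool :=
  if t is Nd _ then true else false.

Definition in_VI (Tt : tree X) (us : seq (tree X)) (w : tree X) : Prop :=
  subtree w Tt /\ is_internal w /\
  exists b : bitseq, size b = size us /\ 1 < count id b /\
    leaves w =i flatten (map leaves (mask b us)).

Definition ola_VI (sigma : X -> 'I_#|X|) (Tt : tree X) (us : seq (tree X))
    (z : int) : Prop :=
  exists w, in_VI Tt us w /\ ola sigma w = z.

Definition target (sigma : X -> 'I_#|X|) (us : seq (tree X)) (z : int) : Prop :=
  exists t, t < size us /\
    let s_t := mu sigma (nth (Nd [::]) us t) in
    s_t != \big[minn/#|X|]_(u <- us) mu sigma u /\ z = (- Posz s_t)%R.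

End Trees.

(* Main.v *)
Require Import Defs.
From mathcomp Require Import all_boot all_order all_algebra.
From Stdlib Require Import Permutation Classical.
Set Implicit Arguments. Unset Strict Implicit. Unset Printing Implicit Defensive.

Scheme contr_mut := Induction for contr Sort Prop
  with fcontr_mut := Induction for fcontr Sort Prop.

Section Aux.
Variable X : finType.
Implicit Types (t w s c d : tree X) (cs ds : seq (tree X)).

Section TreeInd.
Variable P : tree X -> Prop.
Hypothesis HL : forall x, P (Lf x).
Hypothesis HN : forall cs, (forall c, List.In c cs -> P c) -> P (Nd cs).
Fixpoint tree_ind2 t : P t :=
  match t with
  | Lf x => HL x
  | Nd cs => HN ((fix go (l : seq (tree X)) : forall c, List.In c l -> P c :=
      match l return forall c, List.In c l -> P c with
      | [::] => fun c H => match H with end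
      | c0 :: l' => fun c H => match H with
          | or_introl E => eq_ind c0 P (tree_ind2 c0) c E
          | or_intror H' => go l' c H' end
      end) cs)
  end.
End TreeInd.

Lemma memflat x cs : x \in flatten (map (@leaves X) cs) <->
  exists c, List.In c cs /\ x \in leaves c.
Proof.
elim: cs => [|c cs IH] /=; first by split=> // [[c []]].
rewrite mem_cat; split.
  case/orP => [H|/IH [d [Hd Hx]]]; [by exists c; split; [left|] | by exists d; split; [right|]].
case=> d [[<-|Hd] Hx]; first by rewrite Hx.
by apply/orP; right; apply/IH; exists d.
Qed.

Lemma sub_trans a b c : subtree a b -> subtree b c -> subtree a c.
Proof.
move=> H1 H2; elim: H2 H1 => // s0 c0 cs0 Hin _ IH H1.
exact: sub_child Hin (IH H1).
Qed.

Lemma sub_leaves s t : subtree s t -> {subset leaves s <= leaves t}.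
Proof.
elim=> [t0|s0 c0 cs0 Hin _ IH] x Hx //=.
by apply/memflat; exists c0; split=> //; apply: IH.
Qed.

Lemma allIn (f : pred (tree X)) cs c : all f cs -> List.In c cs -> f c.
Proof.
elim: cs => // c0 cs IH /= /andP[H1 H2] [<-|H] //; exact: IH.
Qed.

Lemma sub_nodes (P : nat -> bool) s t : subtree s t -> all_nodes P t -> all_nodes P s.
Proof.
elim=> // s0 c0 cs0 Hin _ IH /= /andP[_ H]; apply: IH.
exact: (allIn (f := all_nodes P)) H Hin.
Qed.

Lemma uniq_flat_In cs c : uniq (flatten (map (@leaves X) cs)) -> List.In c cs ->
  uniq (leaves c).
Proof.
elim: cs => // c0 cs IH /=; rewrite cat_uniq => /and3P[u1 _ u2] [<-|H] //.
exact: IH.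
Qed.

Lemma sub_uniq s t : subtree s t -> uniq (leaves t) -> uniq (leaves s).
Proof.
elim=> // s0 c0 cs0 Hin _ IH /= H; apply: IH; exact: uniq_flat_In H Hin.
Qed.

Lemma sub_inv s cs : subtree s (Nd cs) -> s = Nd cs \/ exists c, List.In c cs /\ subtree s c.
Proof. move=> H; inversion H; subst; [by left | by right; exists c]. Qed.

Lemma sub_invL s x : subtree s (Lf x) -> s = Lf x.
Proof. by move=> H; inversion H. Qed.

Lemma nonempty (P : nat -> bool) t : (forall k, P k -> 0 < k) -> all_nodes P t ->
  exists x, x \in leaves t.
Proof.
move=> HP; elim/tree_ind2: t => [x|cs IH] /=; first by exists x; rewrite inE.
case/andP => /HP; case: cs IH => // c cs IH _ /andP[Hc _].
have [x Hx] := IH c (or_introl erefl) Hc.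
by exists x; rewrite mem_cat Hx.
Qed.

Lemma In_nth (d : tree X) (s : seq (tree X)) i : i < size s -> List.In (nth d s i) s.
Proof. elim: s i => // c s IH [|i] /= H; [by left | right; exact: IH]. Qed.

Lemma nth_of_In (d : tree X) (s : seq (tree X)) c : List.In c s -> exists2 i, i < size s & nth d s i = c.
Proof.
elim: s => // c0 s IH [<-|H]; first by exists 0.
by have [i Hi <-] := IH H; exists i.+1.
Qed.

Lemma disj_idx (d : tree X) (s : seq (tree X)) i j x : uniq (flatten (map (@leaves X) s)) ->
  i < size s -> j < size s -> i != j ->
  x \in leaves (nth d s i) -> x \in leaves (nth d s j) -> False.
Proof.
elim: s i j => [|c s IH] [|i] [|j] //=; rewrite cat_uniq => /and3P[u1 hd u2] Hi Hj Hij.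
- move=> H1 H2; move/negP: hd; apply; apply/hasP; exists x => //.
  by apply/memflat; exists (nth d s j); split=> //; exact: In_nth.
- move=> H1 H2; move/negP: hd; apply; apply/hasP; exists x => //.
  by apply/memflat; exists (nth d s i); split=> //; exact: In_nth.
- exact: IH.
Qed.

Lemma disj_In (s : seq (tree X)) c1 c2 x : uniq (flatten (map (@leaves X) s)) ->
  List.In c1 s -> List.In c2 s -> c1 <> c2 ->
  x \in leaves c1 -> x \in leaves c2 -> False.
Proof.
move=> U H1 H2 Hne.
have [i Hi E1] := nth_of_In (Lf x) H1; have [j Hj E2] := nth_of_In (Lf x) H2.
rewrite -E1 -E2; apply: disj_idx U Hi Hj _.
by apply/negP => /eqP Eij; apply: Hne; rewrite -E1 -E2 Eij.
Qed.

Lemma lam t x y : uniq (leaves t) -> subtree x t -> subtree y t ->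
  (exists l, l \in leaves x /\ l \in leaves y) -> subtree x y \/ subtree y x.
Proof.
elim/tree_ind2: t x y => [z|cs IH] x y U Hx Hy Hl.
  by rewrite (sub_invL Hx) (sub_invL Hy); left; constructor.
case: (sub_inv Hx) => [->|[c1 [I1 S1]]]; first by right.
case: (sub_inv Hy) => [->|[c2 [I2 S2]]]; first by left.
case: (classic (c1 = c2)) => [E|Hne].
  subst c2; apply: (IH c1 I1) => //; exact: uniq_flat_In U I1.
case: Hl => l [L1 L2]; exfalso.
exact: disj_In U I1 I2 Hne (sub_leaves S1 L1) (sub_leaves S2 L2).
Qed.

Lemma contr_sub t' t : contr t' t -> (leaves t' =i leaves t) /\
  forall s, subtree s t -> exists s', subtree s' t' /\ leaves s' =i leaves s.
Proof.
move=> H.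
refine (@contr_mut X (fun t' t _ => (leaves t' =i leaves t) /\
  forall s, subtree s t -> exists s', subtree s' t' /\ leaves s' =i leaves s)
  (fun cs ds _ => (forall x, (exists c, List.In c cs /\ x \in leaves c) <->
       (exists d, List.In d ds /\ x \in leaves d)) /\
    forall s d, List.In d ds -> subtree s d ->
      exists s' c, List.In c cs /\ subtree s' c /\ leaves s' =i leaves s) _ _ _ _ _ _ _ _ H).
- move=> x; split=> // s Hs; rewrite (sub_invL Hs); exists (Lf x); split=> //; constructor.
- move=> cs ds f [H1 H2].
  have E : leaves (Nd cs) =i leaves (Nd ds).
    move=> x /=; apply/idP/idP => /memflat Hx; apply/memflat; exact/H1.
  split=> // s Hs; case: (sub_inv Hs) => [->|[d [Id Sd]]].
    by exists (Nd cs); split=> //; constructor.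
  have [s' [c [Ic [Sc Ec]]]] := H2 s d Id Sd.
  by exists s'; split=> //; exact: sub_child Ic Sc.
- split; first by move=> x; split=> -[? []].
  by move=> s d [].
- move=> c d cs ds hc [Hc1 Hc2] hf [Hf1 Hf2]; split.
    move=> x; split.
      case=> c0 [[<-|I0] Hx]; first by exists d; split; [left | rewrite -Hc1].
      by have [d0 [I1 Hx1]] := proj1 (Hf1 x) (ex_intro _ c0 (conj I0 Hx)); exists d0; split; [right|].
    case=> d0 [[<-|I0] Hx]; first by exists c; split; [left | rewrite Hc1].
    by have [c0 [I1 Hx1]] := proj2 (Hf1 x) (ex_intro _ d0 (conj I0 Hx)); exists c0; split; [right|].
  move=> s d0 [<-|I0] Sd.
    by have [s' [S' E']] := Hc2 s Sd; exists s', c; split; [left|].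
  by have [s' [c0 [I1 [S1 E1]]]] := Hf2 s d0 I0 Sd; exists s', c0; split; [right|].
- move=> cs' cs ds1 ds2 h1 [A1 B1] h2 [A2 B2]; split.
    move=> x; split.
      case=> c0 [[<-|I0] Hx].
        move/memflat: Hx => /A1 [d0 [I1 Hx1]].
        by exists d0; split=> //; apply/List.in_app_iff; left.
      have [d0 [I1 Hx1]] := proj1 (A2 x) (ex_intro _ c0 (conj I0 Hx)).
      by exists d0; split=> //; apply/List.in_app_iff; right.
    case=> d0 [/List.in_app_iff [I0|I0] Hx].
      have [c0 [I1 Hx1]] := proj2 (A1 x) (ex_intro _ d0 (conj I0 Hx)).
      exists (Nd cs'); split; [by left|]; apply/memflat; by exists c0.
    have [c0 [I1 Hx1]] := proj2 (A2 x) (ex_intro _ d0 (conj I0 Hx)).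
    by exists c0; split; [right|].
  move=> s d0 /List.in_app_iff [I0|I0] Sd.
    have [s' [c0 [I1 [S1 E1]]]] := B1 s d0 I0 Sd.
    by exists s', (Nd cs'); split; [left|split=> //; exact: sub_child I1 S1].
  by have [s' [c0 [I1 [S1 E1]]]] := B2 s d0 I0 Sd; exists s', c0; split; [right|].
- move=> cs ds ds' f [A B] pm; split.
    move=> x; split.
      move/A => [d0 [I0 Hx]]; exists d0; split=> //; exact: Permutation_in pm I0.
    case=> d0 [I0 Hx]; apply/A; exists d0; split=> //.
    exact: Permutation_in (Permutation_sym pm) I0.
  move=> s d0 I0 Sd; apply: B Sd; exact: Permutation_in (Permutation_sym pm) I0.
Qed.

End Aux.
Lemma bigmin_le (A : Type) (F : A -> nat) N (s : seq A) x :
  List.In x s -> \big[minn/N]_(u <- s) F u <= F x.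
Proof.
elim: s => // a s IH /= [<-|H]; rewrite big_cons; first exact: geq_minl.
exact: leq_trans (geq_minr _ _) (IH H).
Qed.

Lemma bigmin_att (A : Type) (F : A -> nat) N (s : seq A) : s <> [::] ->
  (forall x, List.In x s -> F x <= N) ->
  exists x, List.In x s /\ \big[minn/N]_(u <- s) F u = F x.
Proof.
elim: s => // a s IH _ HF; rewrite big_cons.
case: s IH HF => [|b s] IH HF.
  exists a; split; first by left.
  by rewrite big_nil; apply/minn_idPl; apply: HF; left.
have [x [Ix Ex]] := IH (fun E => match E with end) (fun x H => HF x (or_intror H)).
rewrite Ex; case: (leqP (F a) (F x)) => h.
  by exists a; split; [left|].
by exists x; split; [right|].
Qed.

Lemma InP (T : eqType) (x : T) s : List.In x s <-> x \in s.
Proof.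
elim: s => //= a s IH; rewrite inE; split.
  by case=> [->|/IH ->]; rewrite ?eqxx ?orbT.
by case/orP => [/eqP->|/IH]; [left|right].
Qed.

Section Main.
Variable X : finType.
Variable sigma : X -> 'I_#|X|.
Implicit Types (t w s c d : tree X) (cs ds : seq (tree X)).

Definition cl t : {set X} := [set x | x \in leaves t].
Definition ismin (S : {set X}) m :=
  (forall y, y \in S -> m <= sigma y) /\ exists2 y, y \in S & m = sigma y.

Lemma ismin_uniq S m1 m2 : ismin S m1 -> ismin S m2 -> m1 = m2.
Proof.
move=> [A1 [y1 Y1 E1]] [A2 [y2 Y2 E2]]; apply/eqP; rewrite eqn_leq; apply/andP; split.
  by rewrite E2; exact: A1.
by rewrite E1; exact: A2.
Qed.

Lemma ismin_mu t : (exists x, x \in leaves t) -> ismin (cl t) (mu sigma t).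
Proof.
move=> [x Hx]; rewrite /mu; split.
  by move=> y; rewrite inE => Hy; apply: bigmin_le; exact/InP.
have Hne : leaves t <> [::] by move=> E; rewrite E in Hx.
have [y [Iy E]] := @bigmin_att _ (fun l => nat_of_ord (sigma l)) #|X| (leaves t) Hne
  (fun y _ => ltnW (ltn_ord _)).
by exists y; [rewrite inE; exact/InP | exact E].
Qed.

Lemma ismin_minn ca cb ma mb : ismin ca ma -> ismin cb mb -> ismin (ca :|: cb) (minn ma mb).
Proof.
move=> [A1 [ya Ya Ea]] [A2 [yb Yb Eb]]; split.
  move=> y; rewrite inE => /orP [H|H].
    exact: leq_trans (geq_minl _ _) (A1 _ H).
  exact: leq_trans (geq_minr _ _) (A2 _ H).
case: (leqP ma mb) => h.
  by exists ya; rewrite // inE Ya.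
by exists yb; rewrite // inE Yb orbT.
Qed.

Lemma cl_Nd2 a b : cl (Nd [:: a; b]) = cl a :|: cl b.
Proof. by apply/setP=> x; rewrite !inE /= cats0 mem_cat. Qed.

Lemma cl_sub s t : subtree s t -> cl s \subset cl t.
Proof. by move=> H; apply/subsetP => x; rewrite !inE; exact: sub_leaves. Qed.

Variables (T' : tree X) (p : nat) (B : 'I_p -> {set X}) (mus : 'I_p -> nat).
Hypotheses (Hbin : all_nodes (fun k => k == 2) T') (Huniq : uniq (leaves T'))
  (Hsig : injective sigma)
  (HB1 : forall i, exists x, x \in B i)
  (HB2 : forall (i j : 'I_p) (x : X), i != j -> x \in B i -> x \in B j -> False)
  (HB3 : forall i, exists2 s, subtree s T' & cl s = B i)
  (HB4 : forall i, ismin (B i) (mus i)).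

Definition LHSv w (z : int) := exists w', subtree w' w /\ is_internal w' /\
  (exists J : {set 'I_p}, (exists i j, [/\ i != j, i \in J & j \in J]) /\
     cl w' = \bigcup_(i in J) B i) /\ ola sigma w' = z.
Definition RHSv w (z : int) := exists i,
  [/\ B i \subset cl w, mus i != mu sigma w & z = (- Posz (mus i))%R].

Lemma ne_sub s : subtree s T' -> exists x, x \in leaves s.
Proof.
move=> H; apply: (nonempty (P := fun k => k == 2)) (sub_nodes H Hbin).
by move=> k /eqP->.
Qed.

Lemma Bsub_contra (S : {set X}) (i1 i2 k : 'I_p) : i1 != i2 -> B i1 \subset S -> B i2 \subset S ->
  S \subset B k -> False.
Proof.
move=> Hne S1 S2 Sk; case: (eqVneq i1 k) => [E|N1].
  subst k; have [x Hx] := HB1 i2.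
  exact: (HB2 Hne (subsetP Sk _ (subsetP S2 _ Hx)) Hx).
have [x Hx] := HB1 i1.
exact: (HB2 N1 Hx (subsetP Sk _ (subsetP S1 _ Hx))).
Qed.

Lemma rhs_split (cw ca cb : {set X}) ma mb z :
  cw = ca :|: cb -> (forall x, x \in ca -> x \in cb -> False) ->
  ismin ca ma -> ismin cb mb -> ma < mb ->
  (forall i, B i \subset cw -> B i \subset ca \/ B i \subset cb) ->
  (forall y, y \in cw -> exists i, B i \subset cw /\ y \in B i) ->
  (exists i, [/\ B i \subset cw, mus i != minn ma mb & z = (- Posz (mus i))%R]) <->
  (z = (- Posz (maxn ma mb))%R \/
   (exists i, [/\ B i \subset ca, mus i != ma & z = (- Posz (mus i))%R]) \/
   (exists i, [/\ B i \subset cb, mus i != mb & z = (- Posz (mus i))%R])).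
Proof.
move=> Ecw Dis [Ma1 [ya Ya Ea]] [Mb1 [yb Yb Eb]] Hlt Split Cov.
have Emin : minn ma mb = ma by apply/minn_idPl; exact: ltnW.
have Emax : maxn ma mb = mb by apply/maxn_idPr; exact: ltnW.
rewrite Emin Emax.
have geb : forall i, B i \subset cb -> mb <= mus i.
  move=> i Si; have [_ [y Y ->]] := HB4 i; apply: Mb1; exact: (subsetP Si).
have sA : ca \subset cw by rewrite Ecw subsetUl.
have sB : cb \subset cw by rewrite Ecw subsetUr.
split.
- case=> i [Si Ni Ez]; case: (Split i Si) => Sab.
    by right; left; exists i.
  case: (eqVneq (mus i) mb) => [E|N]; first by left; rewrite Ez E.
  by right; right; exists i.
- case=> [Ez|[[i [Si Ni Ez]]|[i [Si Ni Ez]]]].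
  + have [j [Sj Yj]] := Cov yb (subsetP sB _ Yb).
    have Sjb : B j \subset cb.
      case: (Split j Sj) => // Sja; exfalso; exact: Dis yb (subsetP Sja _ Yj) Yb.
    have Ej : mus j = mb.
      apply/eqP; rewrite eqn_leq geb // andbT; have [Mj _] := HB4 j; rewrite Eb; exact: Mj.
    exists j; split=> //; last by rewrite Ej.
    by rewrite Ej neq_ltn Hlt orbT.
  + by exists i; split=> //; exact: subset_trans Si sA.
  + exists i; split=> //; first exact: subset_trans Si sB.
    rewrite neq_ltn; apply/orP; right; exact: leq_trans Hlt (geb i Si).
Qed.

Lemma single w (I : {set 'I_p}) i0 z : subtree w T' -> i0 \in I ->
  cl w = \bigcup_(i in I) B i ->
  ~ (exists i j, [/\ i != j, i \in I & j \in I]) -> ~ LHSv w z /\ ~ RHSv w z.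
Proof.
move=> Hw Hi0 Hcl Hno.
have HI : forall i, i \in I -> i = i0.
  move=> i Hi; apply: NNPP => Ne; apply: Hno; exists i, i0; split=> //; exact/eqP.
have Ecl : cl w = B i0.
  apply/setP => x; rewrite Hcl; apply/bigcupP/idP => [[i Hi Hx]|Hx].
    by rewrite -(HI i Hi).
  by exists i0.
split.
- case=> w' [Sw' [_ [[J [[j1 [j2 [Ne J1 J2]]] EJ]] _]]].
  apply: (@Bsub_contra (cl w') _ _ i0 Ne); try by rewrite EJ; exact: bigcup_sup.
  by rewrite -Ecl; exact: cl_sub.
- case=> i [Si Ni _]; case: (eqVneq i i0) => [E|Ne].
    subst i; move/negP: Ni; apply; apply/eqP; apply: ismin_uniq (HB4 i0) _.
    by rewrite -Ecl; apply: ismin_mu; exact: ne_sub.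
  have [x Hx] := HB1 i; apply: (HB2 Ne Hx); rewrite -Ecl; exact: (subsetP Si).
Qed.

Lemma sat_child (wcl : {set X}) c c' (I : {set 'I_p}) :
  wcl = \bigcup_(i in I) B i -> cl c \subset wcl ->
  (forall x, x \in cl c -> x \in cl c' -> False) ->
  (forall i, i \in I -> B i \subset cl c \/ B i \subset cl c') ->
  (exists x, x \in leaves c) ->
  exists2 I' : {set 'I_p}, (exists i, i \in I') & cl c = \bigcup_(i in I') B i.
Proof.
move=> Ew Sc Dis Spl [x0 Hx0].
have key : forall x, x \in cl c -> exists2 i, i \in I & (x \in B i) && (B i \subset cl c).
  move=> x Hx; have := subsetP Sc _ Hx; rewrite Ew => /bigcupP [i Hi Hxi].
  exists i => //; rewrite Hxi /=; case: (Spl i Hi) => // S'.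
  by exfalso; exact: Dis Hx (subsetP S' _ Hxi).
have Hx0' : x0 \in cl c by rewrite inE.
exists [set i in I | B i \subset cl c].
  have [i Hi /andP[_ Si]] := key x0 Hx0'; by exists i; rewrite inE Hi Si.
apply/setP => x; apply/idP/bigcupP.
  move=> Hx; have [i Hi /andP[Hxi Si]] := key x Hx; exists i => //; by rewrite inE Hi Si.
by case=> i; rewrite inE => /andP[_ Si] Hxi; exact: (subsetP Si).
Qed.


Lemma main w : subtree w T' -> forall I : {set 'I_p}, (exists i, i \in I) ->
  cl w = \bigcup_(i in I) B i -> forall z, LHSv w z <-> RHSv w z.
Proof.
elim/tree_ind2: w => [x|cs IH] Hw I [i0 Hi0] Hcl z;
  (case: (classic (exists i j, [/\ i != j, i \in I & j \in I])) => HM;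
   last by have [nL nR] := single z Hw Hi0 Hcl HM; split=> H; exfalso;
     [exact: nL H | exact: nR H]).
  case: HM => i1 [i2 [Ne I1 I2]]; exfalso.
  have [y1 Y1] := HB1 i1; have [y2 Y2] := HB1 i2.
  have : y1 \in cl (Lf x) by rewrite Hcl; apply/bigcupP; exists i1.
  have : y2 \in cl (Lf x) by rewrite Hcl; apply/bigcupP; exists i2.
  rewrite /cl !inE /= ?inE => /eqP E2 /eqP E1; subst y1 y2.
  exact: HB2 Ne Y1 Y2.
have := sub_nodes Hw Hbin => /= /andP[/eqP Hsz _].
case: cs IH Hw Hcl Hsz => [|a [|b [|]]] //= IH Hw Hcl _.
case: HM => i1 [i2 [Ne I1 I2]].
have Ia : List.In a [:: a; b] by left.
have Ib : List.In b [:: a; b] by right; left.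
have Hsa : subtree a T' := sub_trans (sub_child Ia (@Defs.sub_refl _ a)) Hw.
have Hsb : subtree b T' := sub_trans (sub_child Ib (@Defs.sub_refl _ b)) Hw.
set w := Nd [:: a; b].
have Hcl2 : cl w = cl a :|: cl b by exact: cl_Nd2.
have Dis : forall x, x \in cl a -> x \in cl b -> False.
  move=> x; rewrite !inE => Xa Xb.
  have := sub_uniq Hw Huniq; rewrite /= cats0 cat_uniq => /and3P[_ H _].
  by move/negP: H; apply; apply/hasP; exists x.
have Sw : forall i, i \in I -> B i \subset cl w by move=> i Hi; rewrite Hcl; exact: bigcup_sup.
have Split : forall i, B i \subset cl w -> B i \subset cl a \/ B i \subset cl b.
  move=> i Si; have [s Ss Es] := HB3 i; have [y Y] := HB1 i.
  have Ys : y \in leaves s by move: Y; rewrite -Es inE.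
  have Yw : y \in leaves w by move: (subsetP Si _ Y); rewrite inE.
  case: (lam Huniq Ss Hw (ex_intro _ y (conj Ys Yw))) => H.
    case: (sub_inv H) => [Esw|[c [Ic Sc]]].
      exfalso; apply: (@Bsub_contra (cl w) _ _ i Ne (Sw _ I1) (Sw _ I2)).
      by rewrite -Es Esw.
    case: Ic => [E|[E|[]]]; subst c; [left|right]; rewrite -Es; exact: cl_sub Sc.
  exfalso; apply: (@Bsub_contra (cl w) _ _ i Ne (Sw _ I1) (Sw _ I2)).
  rewrite -Es; exact: cl_sub H.
have [Ja HJa EJa] : exists2 I' : {set 'I_p}, (exists i, i \in I') & cl a = \bigcup_(i in I') B i.
  apply: (@sat_child (cl w) a b I Hcl) => //; first by rewrite Hcl2 subsetUl.
    by move=> i Hi; exact: Split (Sw i Hi).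
  exact: ne_sub Hsa.
have [Jb HJb EJb] : exists2 I' : {set 'I_p}, (exists i, i \in I') & cl b = \bigcup_(i in I') B i.
  apply: (@sat_child (cl w) b a I Hcl) => //; first by rewrite Hcl2 subsetUr.
      by move=> x X1 X2; exact: Dis X2 X1.
    by move=> i Hi; case: (Split i (Sw i Hi)); [right|left].
  exact: ne_sub Hsb.
have IHa := IH a Ia Hsa Ja HJa EJa z.
have IHb := IH b Ib Hsb Jb HJb EJb z.
have LS : LHSv w z <-> z = ola sigma w \/ LHSv a z \/ LHSv b z.
  split.
    case=> w' [Sw' [Iw' [HJ Ez]]]; case: (sub_inv Sw') => [E|[c [Ic Sc]]].
      by left; rewrite -Ez E.
    case: Ic => [E|[E|[]]]; subst c; right; [left|right]; exists w';
      exact: (conj Sc (conj Iw' (conj HJ Ez))).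
  case=> [Ez|[[w' [S' R]]|[w' [S' R]]]].
  - exists w; split; first exact: (@Defs.sub_refl _ w).
    split=> //; split; last by rewrite Ez.
    by exists I; split=> //; exists i1, i2.
  - by exists w'; split=> //; exact: sub_trans S' (sub_child Ia (@Defs.sub_refl _ a)).
  - by exists w'; split=> //; exact: sub_trans S' (sub_child Ib (@Defs.sub_refl _ b)).
have ma := ismin_mu (ne_sub Hsa); have mb := ismin_mu (ne_sub Hsb).
have Emu : mu sigma w = minn (mu sigma a) (mu sigma b).
  apply: ismin_uniq (ismin_mu (ne_sub Hw)) _; rewrite Hcl2; exact: ismin_minn.
have Cov : forall y, y \in cl w -> exists i, B i \subset cl w /\ y \in B i.
  move=> y; rewrite Hcl => /bigcupP [i Hi Yi]; exists i; split=> //; exact: bigcup_sup.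
have Eola : ola sigma w = (- Posz (maxn (mu sigma a) (mu sigma b)))%R by [].
have Hr : RHSv w z <-> z = ola sigma w \/ RHSv a z \/ RHSv b z.
  case: (ltngtP (mu sigma a) (mu sigma b)) => h; rewrite /RHSv Emu Eola.
  - exact: (rhs_split z Hcl2 Dis ma mb h Split Cov).
  - have Hcl2' : cl w = cl b :|: cl a by rewrite Hcl2 setUC.
    have Dis' : forall x, x \in cl b -> x \in cl a -> False.
      by move=> x X1 X2; exact: Dis X2 X1.
    have Split' : forall i, B i \subset cl w -> B i \subset cl b \/ B i \subset cl a.
      by move=> i Si; case: (Split i Si); [right|left].
    have := rhs_split z Hcl2' Dis' mb ma h Split' Cov.
    rewrite minnC maxnC; tauto.
  - exfalso; case: ma => _ [ya Ya Ea]; case: mb => _ [yb Yb Eb].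
    move: h; rewrite Ea Eb => /ord_inj /Hsig E; subst yb; exact: Dis Ya Yb.
tauto.
Qed.

End Main.
Lemma mask_mem (X : finType) (d : tree X) x (b : bitseq) (us : seq (tree X)) :
  size b = size us ->
  (x \in flatten (map (@leaves X) (mask b us)) <->
   exists i, [/\ i < size us, nth false b i & x \in leaves (nth d us i)]).
Proof.
elim: us b => [|c us IH] [|bb b] //=; first by split=> // [[i []]].
case=> Hs; case: bb => /=.
  rewrite mem_cat; split.
    case/orP => [Hx|/(IH _ Hs) [i [Hi Hb Hx]]]; first by exists 0.
    by exists i.+1.
  case=> -[|i] [Hi Hb Hx] //=; first by rewrite Hx.
  by apply/orP; right; apply/(IH _ Hs); exists i.
rewrite (IH _ Hs); split; case=> i [Hi Hb Hx]; first by exists i.+1.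
by case: i Hi Hb Hx => [|i] //= Hi Hb Hx; exists i.
Qed.

Lemma count2 (b : bitseq) : 1 < count id b ->
  exists i j, [/\ i != j, i < size b, j < size b, nth false b i & nth false b j].
Proof.
elim: b => //= x b IH; case: x => /=.
  rewrite add1n ltnS -has_count => /hasP [y Hy Hyt].
  have [j Hj Ej] := nthP false Hy.
  by exists 0, j.+1; split=> //=; rewrite Ej.
rewrite add0n => /IH [i [j [Ne Hi Hj Bi Bj]]].
by exists i.+1, j.+1; split.
Qed.

Lemma count2' (b : bitseq) i j : i != j -> i < size b -> j < size b ->
  nth false b i -> nth false b j -> 1 < count id b.
Proof.
elim: b i j => [|x b IH] [|i] [|j] //= Ne Hi Hj Bi Bj.
- have : 0 < count id b by rewrite -has_count; apply/hasP; exists (nth false b j) => //; exact: mem_nth.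
  by rewrite Bi add1n ltnS.
- have : 0 < count id b by rewrite -has_count; apply/hasP; exists (nth false b i) => //; exact: mem_nth.
  by rewrite Bj add1n ltnS.
- exact: leq_trans (IH i j Ne Hi Hj Bi Bj) (leq_addl _ _).
Qed.

Lemma bigmin_leN (A : Type) (F : A -> nat) N (s : seq A) :
  \big[minn/N]_(u <- s) F u <= N.
Proof.
elim: s => [|a s IH]; first by rewrite big_nil.
by rewrite big_cons; exact: leq_trans (geq_minr _ _) IH.
Qed.

Lemma half (X : finType) (T Tt : tree X) (sigma : X -> 'I_#|X|) (us : seq (tree X)) :
  planted_tree T -> resolves Tt T -> leaf_ordering sigma ->
  subtree (Nd us) T -> 2 <= size us ->
  forall z : int, ola_VI sigma Tt us z <-> target sigma us z.
Proof.
move=> [HTn [HTu HTall]] [[Hbin [Hu _]] Hc] Hbij Hsub Hp z.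
have Hsig : injective sigma := bij_inj Hbij.
set p := size us.
pose d := (Nd [::] : tree X).
pose B := fun i : 'I_p => cl (nth d us i).
pose mus := fun i : 'I_p => mu sigma (nth d us i).
have Hflat : uniq (flatten (map (@leaves X) us)) := sub_uniq Hsub HTu.
have HsubI : forall i : 'I_p, subtree (nth d us i) T :=
  fun i => sub_trans (sub_child (In_nth d (ltn_ord i)) (@Defs.sub_refl _ _)) Hsub.
have HB1 : forall i, exists x, x \in B i.
  move=> i; have [x Hx] := nonempty (P := fun k => 1 < k) (fun k h => ltnW h)
    (sub_nodes (HsubI i) HTn).
  by exists x; rewrite inE.
have HB2 : forall (i j : 'I_p) (x : X), i != j -> x \in B i -> x \in B j -> False.
  move=> i j x Ne; rewrite !inE; exact: disj_idx Hflat (ltn_ord i) (ltn_ord j) Ne.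
have [_ Hcs] := contr_sub Hc.
have HB3 : forall i, exists2 s, subtree s Tt & cl s = B i.
  move=> i; have [s' [S' E']] := Hcs _ (HsubI i); exists s' => //.
  by apply/setP => x; rewrite !inE E'.
have HB4 : forall i, ismin sigma (B i) (mus i).
  move=> i; apply: ismin_mu; move: (HB1 i) => [x]; rewrite inE => Hx; by exists x.
have [w0 [Sw0 Ew0]] := Hcs _ Hsub.
have Hcl0 : cl w0 = \bigcup_(i in [set: 'I_p]) B i.
  apply/setP => x; rewrite inE Ew0 /=; apply/idP/bigcupP.
    move/memflat => [c [Ic Hx]]; have [i Hi Ei] := nth_of_In d Ic.
    exists (Ordinal Hi) => //; rewrite /B inE; by rewrite -Ei in Hx.
  case=> i _; rewrite /B inE => Hx; apply/memflat; exists (nth d us i); split=> //.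
  exact: In_nth.
have Hp0 : 0 < p by exact: leq_trans _ Hp.
pose i0 := Ordinal Hp0.
have I0 : exists i, i \in [set: 'I_p] by exists i0; rewrite inE.
have Mn := main Hbin Hu Hsig HB1 HB2 HB3 HB4.
have M0 := Mn w0 Sw0 _ I0 Hcl0 z.
have Hne0 : exists x, x \in leaves w0.
  have [x Hx] := HB1 i0; exists x.
  have : x \in cl w0 by rewrite Hcl0; apply/bigcupP; exists i0.
  by rewrite inE.
set g := \big[minn/#|X|]_(u <- us) mu sigma u.
have Eg : mu sigma w0 = g.
  apply: ismin_uniq (ismin_mu sigma Hne0) _; split.
    move=> y; rewrite Hcl0 => /bigcupP [i _ Yi].
    apply: leq_trans (_ : g <= mus i) ((HB4 i).1 _ Yi).
    exact: bigmin_le (In_nth d (ltn_ord i)).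
  have Hus : us <> [::] by move=> E; move: Hp; rewrite /p E.
  have [u [Iu Eu]] := @bigmin_att _ (mu sigma) #|X| us Hus (fun u _ => bigmin_leN (fun l => nat_of_ord (sigma l)) _ (leaves u)).
  have [i Hi Ei] := nth_of_In d Iu.
  have [_ [y Yi Ey]] := HB4 (Ordinal Hi).
  exists y; first by rewrite Hcl0; apply/bigcupP; exists (Ordinal Hi).
  by rewrite /g Eu -Ei -Ey.
have Ht : target sigma us z <-> RHSv sigma B mus w0 z.
  split.
    case=> t [Ht [Nt Ez]]; exists (Ordinal Ht); split=> //.
    - by rewrite Hcl0; exact: bigcup_sup.
    - by rewrite Eg.
  case=> i [_ Ni Ez]; exists i; split; first exact: ltn_ord.
  by split=> //; rewrite Eg in Ni.
have Hv : ola_VI sigma Tt us z <-> LHSv sigma B Tt z.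
  split.
    case=> w [[Sw [Iw [b [Sb [Cb Eb]]]]] Ez]; exists w; split=> //; split=> //.
    split=> //; exists [set i : 'I_p | nth false b i]; split.
      have [i [j [Ne Hi Hj Bi Bj]]] := count2 Cb.
      rewrite Sb in Hi Hj.
      by exists (Ordinal Hi), (Ordinal Hj); rewrite !inE; split.
    apply/setP => x; rewrite inE Eb; apply/idP/bigcupP.
      move/(mask_mem d x Sb) => [i [Hi Bi Hx]].
      by exists (Ordinal Hi); rewrite ?inE.
    case=> i; rewrite !inE => Bi Hx; apply/(mask_mem d x Sb).
    by exists i; split=> //; exact: ltn_ord.
  case=> w [Sw [Iw [[J [[i [j [Ne Hi Hj]]] EJ]] Ez]]].
  pose b := [seq i \in J | i <- enum 'I_p].
  have Sb : size b = size us by rewrite size_map size_enum_ord.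
  have Nb : forall k : 'I_p, nth false b k = (k \in J).
    by move=> k; rewrite (nth_map i0) ?size_enum_ord // nth_ord_enum.
  exists w; split=> //; split=> //; split=> //; exists b; split=> //; split.
    apply: (@count2' b i j) => //; rewrite ?Sb ?Nb //; exact: ltn_ord.
  move=> x; apply/idP/idP => Hx.
    apply/(mask_mem d x Sb).
    have : x \in cl w by rewrite inE.
    rewrite EJ => /bigcupP [k Hk Hxk].
    by exists k; split; [exact: ltn_ord | rewrite Nb | rewrite inE in Hxk].
  move/(mask_mem d x Sb): Hx => [k [Hk Bk Hxk]].
  have : x \in cl w.
    rewrite EJ; apply/bigcupP; exists (Ordinal Hk); first by rewrite -Nb.
    by rewrite /B inE.
  by rewrite inE.
rewrite Hv Ht.
split.
- case=> w [Sw [Iw [[J [[i [j [Ne Hi Hj]]] EJ]] Ez]]].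
  have [y Yi] := HB1 i.
  have Yw : y \in leaves w.
    have : y \in cl w by rewrite EJ; apply/bigcupP; exists i.
    by rewrite inE.
  have Yw0 : y \in leaves w0.
    have : y \in cl w0 by rewrite Hcl0; apply/bigcupP; exists i.
    by rewrite inE.
  case: (lam Hu Sw Sw0 (ex_intro _ y (conj Yw Yw0))) => H.
    apply/M0; exists w; split=> //; split=> //; split=> //.
    by exists J; split=> //; exists i, j.
  have Ecl : cl w = cl w0.
    apply/eqP; rewrite eqEsubset (cl_sub H) andbT EJ Hcl0.
    by apply/bigcupsP => k _; exact: bigcup_sup.
  have Hi0 : exists k, k \in J by exists i.
  have := proj1 (Mn w Sw J Hi0 EJ z).
  case.
    exists w; split; first exact: Defs.sub_refl.
    split=> //; split=> //; by exists J; split=> //; exists i, j.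
  move=> k [Sk Nk Ez']; exists k; split=> //; first by rewrite -Ecl.
  have Emu : mu sigma w = mu sigma w0.
    apply: ismin_uniq (ismin_mu sigma Hne0); rewrite -Ecl.
    apply: ismin_mu; by exists y.
  by rewrite -Emu.
- move/M0 => [w [Sw R]]; exists w; split=> //; exact: sub_trans Sw Sw0.
Qed.

Theorem mainTheorem8 (X : finType) (T T' T'' : tree X)
    (sigma : X -> 'I_#|X|) (us : seq (tree X)) :
  planted_tree T -> resolves T' T -> resolves T'' T ->
  leaf_ordering sigma ->
  subtree (Nd us) T -> 2 <= size us ->
  (forall z : int, ola_VI sigma T' us z <-> target sigma us z) /\
  (forall z : int, ola_VI sigma T'' us z <-> target sigma us z).
Proof.
move=> HT H1 H2 Hs Hsub Hp; split=> z; [exact: (half HT H1 Hs Hsub Hp) | exact: (half HT H2 Hs Hsub Hp)].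
Qed.
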